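(* Let $g\ge 1$, let $n\in\mathbb{Z}\setminus\{0\}$, and let $u_1,\dots,u_{2g+1}$ be pairwise distinct complex numbers, regarded as varying in a small open set. Consider the hyperelliptic curve $v^2=(u-u_1)\cdots(u-u_{2g+1})$. Let $\gamma$ be a closed cycle on this curve that avoids the branch points and the point at infinity, transported continuously as the $u_j$ vary. Define $$a_i=\oint_\gamma \frac{v^n\,du}{u-u_i},\qquad i=1,\dots,2g+1,$$ as functions of $(u_1,\dots,u_{2g+1})$. Then $$\frac{\partial a_i}{\partial u_j}=\frac{n}{2}\,\frac{a_i-a_j}{u_j-u_i}\quad\text{for all } i\neq j,\qquad\text{and}\qquad \sum_{i=1}^{2g+1}a_i=0.$$
   Context: The system in the conclusion is the upper triangular reduction of the rank two Schlesinger system. In this reduction all residue matrices have eigenvalues $\pm n/4$: $A^{(i)}=\begin{pmatrix} n/4 & a_i\\ 0 & -n/4\end{pmatrix}$. *)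

(* Defs.v *)
From Stdlib Require Import Reals ZArith.
From Coquelicot Require Import Coquelicot.
Open Scope R_scope.

(* Integer powers of complex numbers (v <> 0 when n < 0). *)
Definition Cpowz (v : C) (n : Z) : C :=
  match n with
  | Z0 => RtoC 1
  | Zpos p => Cpow v (Pos.to_nat p)
  | Zneg p => Cinv (Cpow v (Pos.to_nat p))
  end.

(* Points of C^N are represented as U : nat -> C, only the indices k < N matter. *)

Fixpoint Cprod_lt (N : nat) (f : nat -> C) : C :=
  match N with
  | O => RtoC 1
  | S m => Cmult (Cprod_lt m f) (f m)
  end.

Fixpoint Csum_lt (N : nat) (f : nat -> C) : C :=
  match N with
  | O => RtoC 0
  | S m => Cplus (Csum_lt m f) (f m)
  end.

Definition close_lt (N : nat) (U U' : nat -> C) (d : R) : Prop :=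
  forall k, (k < N)%nat -> Cmod (Cminus (U' k) (U k)) < d.

Definition open_CN (N : nat) (Om : (nat -> C) -> Prop) : Prop :=
  forall U, Om U -> exists d, 0 < d /\ forall U', close_lt N U U' d -> Om U'.

Definition shift_coord (U : nat -> C) (j : nat) (h : C) : nat -> C :=
  fun k => if Nat.eqb k j then Cplus (U k) h else U k.

Definition has_partial (F : (nat -> C) -> C) (U : nat -> C) (j : nat) (L : C) : Prop :=
  filterlim (fun h : C => Cdiv (Cminus (F (shift_coord U j h)) (F U)) h)
            (locally' (0 : C)) (locally L).

Definition jointly_continuous_on (N : nat) (Om : (nat -> C) -> Prop)
  (V : (nat -> C) -> R -> C) : Prop :=
  forall U t, Om U -> 0 <= t <= 1 ->
    forall eps, 0 < eps -> exists d, 0 < d /\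
      forall U' t', Om U' -> 0 <= t' <= 1 -> close_lt N U U' d -> Rabs (t' - t) < d ->
        Cmod (Cminus (V U' t') (V U t)) < eps.

(* a_i(U) = \oint_gamma v^n du / (u - u_i), with the cycle parametrised by
   t in [0,1] |-> (gamma t, V U t). *)
Definition a_coef (n : Z) (gamma gamma' : R -> C) (V : (nat -> C) -> R -> C)
  (i : nat) (U : nat -> C) : C :=
  RInt (V := C_R_CompleteNormedModule)
    (fun t => Cdiv (Cmult (Cpowz (V U t) n) (gamma' t)) (Cminus (gamma t) (U i))) 0 1.

(* Main.v *)
Require Import Defs.
From Stdlib Require Import Reals ZArith Lra Lia Classical IndefiniteDescription.
From Coquelicot Require Import Coquelicot.
Open Scope R_scope.


Section Gen.
Context {X : Type} (F : (X -> Prop) -> Prop) {FF : Filter F}.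

Definition Sm (f : X -> C) := forall e, 0 < e -> F (fun x => Cmod (f x) < e).
Definition Bnd (f : X -> C) := exists M, F (fun x => Cmod (f x) <= M).
Definition LB (f : X -> C) := exists c, 0 < c /\ F (fun x => c <= Cmod (f x)).
Definition Cv (f a : X -> C) := Sm (fun x => Cminus (f x) (a x)).
Definition Dd (d f a L : X -> C) := forall eps, 0 < eps ->
  F (fun x => Cmod (Cminus (Cminus (f x) (a x)) (Cmult (d x) (L x))) <= eps * Cmod (d x)).

Lemma Bnd_pos f : Bnd f -> exists M, 0 < M /\ F (fun x => Cmod (f x) <= M).
Proof.
  intros [M HM]. exists (Rabs M + 1). split. pose proof (Rabs_pos M); lra.
  apply (filter_imp _ _ (fun x H => Rle_trans _ _ _ H (Rle_trans _ _ _ (RRle_abs M) (Rlt_le _ _ (Rlt_plus_1 _))))) in HM. exact HM.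
Qed.

Lemma Bnd_mult f g : Bnd f -> Bnd g -> Bnd (fun x => Cmult (f x) (g x)).
Proof.
  intros Hf Hg. destruct (Bnd_pos f Hf) as [M1 [P1 H1]]. destruct (Bnd_pos g Hg) as [M2 [P2 H2]].
  exists (M1*M2). apply (filter_imp _ _ (fun x H => H) ) in H1.
  generalize (filter_and (F:=F) _ _ H1 H2). apply filter_imp. intros x [A B].
  rewrite Cmod_mult. apply Rmult_le_compat; auto using Cmod_ge_0.
Qed.

Lemma Bnd_plus f g : Bnd f -> Bnd g -> Bnd (fun x => Cplus (f x) (g x)).
Proof.
  intros [M1 H1] [M2 H2]. exists (M1+M2).
  generalize (filter_and (F:=F) _ _ H1 H2). apply filter_imp. intros x [A B].
  eapply Rle_trans. apply Cmod_triangle. lra.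
Qed.

Lemma Bnd_const c : Bnd (fun _ => c).
Proof. exists (Cmod c). apply filter_forall. intros; lra. Qed.

Lemma Bnd_ext f g : (forall x, f x = g x) -> Bnd f -> Bnd g.
Proof. intros E [M H]. exists M. revert H. apply filter_imp. intros x; rewrite E; auto. Qed.

Lemma Bnd_Cv f a : Cv f a -> Bnd a -> Bnd f.
Proof.
  intros Hc [M H]. exists (M+1). generalize (filter_and (F:=F) _ _ H (Hc 1 Rlt_0_1)).
  apply filter_imp. intros x [A B].
  replace (f x) with (Cplus (a x) (Cminus (f x) (a x))) by ring.
  eapply Rle_trans. apply Cmod_triangle. lra.
Qed.

Lemma LB_Cv f a : Cv f a -> LB a -> LB f.
Proof.
  intros Hc [c [Pc H]]. exists (c/2). split. lra.
  generalize (filter_and (F:=F) _ _ H (Hc (c/2) ltac:(lra))).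
  apply filter_imp. intros x [A B].
  replace (a x) with (Cplus (f x) (Copp (Cminus (f x) (a x)))) in A by ring.
  pose proof (Cmod_triangle (f x) (Copp (Cminus (f x) (a x)))).
  rewrite Cmod_opp in H0. lra.
Qed.

Lemma LB_nz f : LB f -> F (fun x => f x <> 0%C).
Proof.
  intros [c [Pc H]]. revert H. apply filter_imp. intros x H E. rewrite E, Cmod_0 in H. lra.
Qed.

Lemma Bnd_inv f : LB f -> Bnd (fun x => Cinv (f x)).
Proof.
  intros [c [Pc H]]. exists (/c). revert H. apply filter_imp. intros x H.
  assert (f x <> 0%C). { intro E. rewrite E, Cmod_0 in H. lra. }
  rewrite Cmod_inv by auto. apply Rinv_le_contravar; lra.
Qed.

Lemma Cv_const a : Cv (fun _ => a) (fun _ => a).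
Proof. intros e He. apply filter_forall. intros x. replace (Cminus a a) with (RtoC 0) by ring. rewrite Cmod_0. auto. Qed.

Lemma Cv_refl a : Cv a a.
Proof. intros e He. apply filter_forall. intros x. replace (Cminus (a x) (a x)) with (RtoC 0) by ring. rewrite Cmod_0. auto. Qed.

Lemma Cv_ext f g a b : (forall x, f x = g x) -> (forall x, a x = b x) -> Cv f a -> Cv g b.
Proof. intros E1 E2 H e He. generalize (H e He). apply filter_imp. intros x. rewrite E1, E2. auto. Qed.

Lemma Cv_plus f a g b : Cv f a -> Cv g b -> Cv (fun x => Cplus (f x) (g x)) (fun x => Cplus (a x) (b x)).
Proof.
  unfold Cv, Sm in *. intros H1 H2 e He. generalize (filter_and (F:=F) _ _ (H1 (e/2) ltac:(lra)) (H2 (e/2) ltac:(lra))).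
  apply filter_imp. intros x [A B].
  replace (Cminus (Cplus (f x) (g x)) (Cplus (a x) (b x))) with (Cplus (Cminus (f x) (a x)) (Cminus (g x) (b x))) by ring.
  eapply Rle_lt_trans. apply Cmod_triangle. lra.
Qed.

Lemma Cv_mult f a g b : Cv f a -> Cv g b -> Bnd a -> Bnd b ->
  Cv (fun x => Cmult (f x) (g x)) (fun x => Cmult (a x) (b x)).
Proof.
  unfold Cv, Sm in *. intros H1 H2 Ba Bb e He.
  destruct (Bnd_pos a Ba) as [Ma [Pa HA]]. destruct (Bnd_pos b Bb) as [Mb [Pb HB]].
  set (K := Ma + Mb + 1). assert (PK : 0 < K) by (unfold K; lra).
  set (e1 := Rmin 1 (e / K)). assert (Pe1 : 0 < e1) by (apply Rmin_pos; [lra| apply Rdiv_lt_0_compat; lra]).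
  assert (Le1 : e1 <= 1) by apply Rmin_l. assert (Le2 : e1 * K <= e).
  { unfold e1. apply Rle_trans with (e/K*K). apply Rmult_le_compat_r. lra. apply Rmin_r. field_simplify; lra. }
  generalize (filter_and (F:=F) _ _ (filter_and (F:=F) _ _ (H1 e1 Pe1) (H2 e1 Pe1)) (filter_and (F:=F) _ _ HA HB)).
  apply filter_imp. intros x [[A B] [C D]].
  replace (Cminus (Cmult (f x) (g x)) (Cmult (a x) (b x))) with
    (Cplus (Cplus (Cmult (Cminus (f x) (a x)) (b x)) (Cmult (a x) (Cminus (g x) (b x))))
      (Cmult (Cminus (f x) (a x)) (Cminus (g x) (b x)))) by ring.
  eapply Rle_lt_trans. apply Cmod_triangle. rewrite !Cmod_mult.
  pose proof (Cmod_triangle (Cmult (Cminus (f x) (a x)) (b x)) (Cmult (a x) (Cminus (g x) (b x)))).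
  rewrite !Cmod_mult in H.
  pose proof (Cmod_ge_0 (Cminus (f x) (a x))). pose proof (Cmod_ge_0 (Cminus (g x) (b x))).
  pose proof (Cmod_ge_0 (a x)). pose proof (Cmod_ge_0 (b x)).
  assert (Cmod (Cminus (f x) (a x)) * Cmod (b x) <= e1 * Mb) by (apply Rmult_le_compat; lra).
  assert (Cmod (a x) * Cmod (Cminus (g x) (b x)) <= Ma * e1) by (apply Rmult_le_compat; lra).
  assert (Cmod (Cminus (f x) (a x)) * Cmod (Cminus (g x) (b x)) < e1 * 1).
  { apply Rle_lt_trans with (e1 * Cmod (Cminus (g x) (b x))). apply Rmult_le_compat_r; lra.
    apply Rmult_lt_compat_l; lra. }
  unfold K in Le2. nra.
Qed.

End Gen.


Lemma Cmod_sub x y : Cmod (Cminus x y) <= Cmod x + Cmod y.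
Proof. unfold Cminus. eapply Rle_trans. apply Cmod_triangle. rewrite Cmod_opp. lra. Qed.

Lemma Cmod_div_le (N Q : C) (B q : R) : 0 < q -> q <= Cmod Q -> Cmod N <= B ->
  Cmod (Cmult N (Cinv Q)) <= B / q.
Proof.
  intros Pq HQ HN. assert (Q <> 0%C). { intro E. rewrite E, Cmod_0 in HQ. lra. }
  rewrite Cmod_mult, Cmod_inv by auto. unfold Rdiv.
  apply Rmult_le_compat; auto using Cmod_ge_0. left; apply Rinv_0_lt_compat; lra.
  apply Rinv_le_contravar; lra.
Qed.

Section Gen2.
Context {X : Type} (F : (X -> Prop) -> Prop) {FF : Filter F}.

Lemma Dd_Cv d f a L : Dd F d f a L -> Sm F d -> Bnd F L -> Cv F f a.
Proof.
  unfold Dd, Cv, Sm. intros H Hd HL. destruct (Bnd_pos F L HL) as [M [PM HM]].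
  intros e He. generalize (filter_and (F:=F) _ _ (filter_and (F:=F) _ _ (H 1 Rlt_0_1) (Hd (e/(1+M)) ltac:(apply Rdiv_lt_0_compat; lra))) HM).
  apply filter_imp. intros x [[A B] C].
  replace (Cminus (f x) (a x)) with (Cplus (Cminus (Cminus (f x) (a x)) (Cmult (d x) (L x))) (Cmult (d x) (L x))) by ring.
  eapply Rle_lt_trans. apply Cmod_triangle. rewrite Cmod_mult.
  pose proof (Cmod_ge_0 (d x)).
  assert (Cmod (d x) * Cmod (L x) <= Cmod (d x) * M) by (apply Rmult_le_compat_l; lra).
  assert (Cmod (d x) * (1 + M) < e).
  { apply Rmult_lt_reg_r with (/(1+M)). apply Rinv_0_lt_compat; lra.
    rewrite Rmult_assoc, Rinv_r by lra. rewrite Rmult_1_r. exact B. }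
  nra.
Qed.

Lemma Dd_ext d f a L f' a' L' : (forall x, f x = f' x) -> (forall x, a x = a' x) -> (forall x, L x = L' x) ->
  Dd F d f a L -> Dd F d f' a' L'.
Proof. unfold Dd. intros E1 E2 E3 H e He. generalize (H e He). apply filter_imp. intros x. rewrite E1, E2, E3. auto. Qed.

Lemma Dd_ext_ev d f a L f' : F (fun x => f x = f' x) -> Dd F d f a L -> Dd F d f' a L.
Proof. unfold Dd. intros E H e He. generalize (filter_and (F:=F) _ _ E (H e He)). apply filter_imp. intros x [E1 H1]. rewrite <- E1. auto. Qed.

Lemma Dd_mult_log d f a K1 g b K2 : Dd F d f a (fun x => Cmult (a x) (K1 x)) -> Dd F d g b (fun x => Cmult (b x) (K2 x)) ->
  Sm F d -> Bnd F a -> Bnd F b -> Bnd F K1 -> Bnd F K2 ->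
  Dd F d (fun x => Cmult (f x) (g x)) (fun x => Cmult (a x) (b x)) (fun x => Cmult (Cmult (a x) (b x)) (Cplus (K1 x) (K2 x))).
Proof.
  intros H1 H2 Hd Ba Bb BK1 BK2.
  assert (Cg : Cv F g b) by (apply (Dd_Cv d g b _ H2 Hd); apply Bnd_mult; auto).
  destruct (Bnd_pos F a Ba) as [Ma [Pa HA]]. destruct (Bnd_pos F b Bb) as [Mb [Pb HB]].
  destruct (Bnd_pos F K1 BK1) as [Mk [Pk HK]].
  intros eps Heps. set (K := Mb + 1 + Ma + Ma * Mk). assert (PK : 0 < K) by (unfold K; nra).
  set (e1 := Rmin 1 (eps / K)). assert (Pe1 : 0 < e1) by (apply Rmin_pos; [lra| apply Rdiv_lt_0_compat; lra]).
  assert (Le1 : e1 <= 1) by apply Rmin_l. assert (Le2 : e1 * K <= eps).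
  { unfold e1. apply Rle_trans with (eps/K*K). apply Rmult_le_compat_r. lra. apply Rmin_r. field_simplify; lra. }
  unfold Dd, Cv, Sm in *.
  generalize (filter_and (F:=F) _ _ (filter_and (F:=F) _ _ (H1 e1 Pe1) (H2 e1 Pe1))
     (filter_and (F:=F) _ _ (filter_and (F:=F) _ _ HA HB) (filter_and (F:=F) _ _ HK (Cg e1 Pe1)))).
  apply filter_imp. intros x [[A B] [[C D] [E G]]].
  replace (Cminus (Cminus (Cmult (f x) (g x)) (Cmult (a x) (b x))) (Cmult (d x) (Cmult (Cmult (a x) (b x)) (Cplus (K1 x) (K2 x)))))
   with (Cplus (Cplus (Cmult (Cminus (Cminus (f x) (a x)) (Cmult (d x) (Cmult (a x) (K1 x)))) (g x))
     (Cmult (a x) (Cminus (Cminus (g x) (b x)) (Cmult (d x) (Cmult (b x) (K2 x))))))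
     (Cmult (Cmult (Cmult (d x) (a x)) (K1 x)) (Cminus (g x) (b x)))) by ring.
  assert (Hg : Cmod (g x) <= Mb + 1).
  { replace (g x) with (Cplus (b x) (Cminus (g x) (b x))) by ring. eapply Rle_trans. apply Cmod_triangle. lra. }
  eapply Rle_trans. apply Cmod_triangle. eapply Rle_trans. apply Rplus_le_compat_r. apply Cmod_triangle.
  rewrite !Cmod_mult.
  pose proof (Cmod_ge_0 (d x)). pose proof (Cmod_ge_0 (a x)). pose proof (Cmod_ge_0 (K1 x)).
  pose proof (Cmod_ge_0 (g x)). pose proof (Cmod_ge_0 (Cminus (g x) (b x))).
  pose proof (Cmod_ge_0 (Cminus (Cminus (f x) (a x)) (Cmult (d x) (Cmult (a x) (K1 x))))).
  pose proof (Cmod_ge_0 (Cminus (Cminus (g x) (b x)) (Cmult (d x) (Cmult (b x) (K2 x))))).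
  assert (T1 : Cmod (Cminus (Cminus (f x) (a x)) (Cmult (d x) (Cmult (a x) (K1 x)))) * Cmod (g x) <= e1 * Cmod (d x) * (Mb+1)) by (apply Rmult_le_compat; lra).
  assert (T2 : Cmod (a x) * Cmod (Cminus (Cminus (g x) (b x)) (Cmult (d x) (Cmult (b x) (K2 x)))) <= Ma * (e1 * Cmod (d x))) by (apply Rmult_le_compat; lra).
  assert (T3a : Cmod (a x) * Cmod (K1 x) <= Ma * Mk) by (apply Rmult_le_compat; lra).
  assert (T3 : Cmod (d x) * Cmod (a x) * Cmod (K1 x) * Cmod (Cminus (g x) (b x)) <= Cmod (d x) * (Ma * Mk) * e1).
  { apply Rmult_le_compat. apply Rmult_le_pos; [apply Rmult_le_pos|]; lra. lra.
    rewrite Rmult_assoc. apply Rmult_le_compat_l; lra. lra. }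
  assert (e1 * K * Cmod (d x) <= eps * Cmod (d x)) by (apply Rmult_le_compat_r; lra).
  assert (e1 * K * Cmod (d x) = e1 * Cmod (d x) * (Mb+1) + Ma * (e1 * Cmod (d x)) + Cmod (d x) * (Ma*Mk) * e1) by (unfold K; ring).
  lra.
Qed.

Lemma Dd_const d c : Dd F d (fun _ => c) (fun _ => c) (fun _ => 0%C).
Proof.
  intros eps He. apply filter_forall. intros x.
  replace (Cminus (Cminus c c) (Cmult (d x) 0)) with (RtoC 0) by ring. rewrite Cmod_0.
  pose proof (Cmod_ge_0 (d x)). nra.
Qed.

Lemma Bnd_pow a m : Bnd F a -> Bnd F (fun x => Cpow (a x) m).
Proof.
  intros Ba. induction m. exists 1. apply filter_forall. intros; simpl; rewrite Cmod_1; lra. simpl. apply Bnd_mult; auto.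
Qed.

Lemma Dd_pow_log d f a K m : Dd F d f a (fun x => Cmult (a x) (K x)) -> Sm F d -> Bnd F a -> Bnd F K ->
  Dd F d (fun x => Cpow (f x) m) (fun x => Cpow (a x) m) (fun x => Cmult (Cpow (a x) m) (Cmult (RtoC (INR m)) (K x))).
Proof.
  intros H Hd Ba BK. induction m.
  - intros eps He. apply filter_forall. intros x. simpl Cpow.
    replace (Cminus (Cminus 1 1) (Cmult (d x) (Cmult 1 (Cmult (RtoC (INR 0)) (K x))))) with (RtoC 0) by (simpl; ring).
    rewrite Cmod_0. pose proof (Cmod_ge_0 (d x)). nra.
  - assert (HH := Dd_mult_log d f a K (fun x => Cpow (f x) m) (fun x => Cpow (a x) m)
          (fun x => Cmult (RtoC (INR m)) (K x)) H IHm Hd Ba (Bnd_pow a m Ba) BK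
          (Bnd_mult F _ _ (Bnd_const F _) BK)).
    revert HH. apply Dd_ext.
    + intros x; reflexivity.
    + intros x; reflexivity.
    + intros x. rewrite S_INR, RtoC_plus. simpl Cpow. ring.
Qed.

Lemma Dd_inv_log d f a K : Dd F d f a (fun x => Cmult (a x) (K x)) -> Sm F d -> LB F a -> Bnd F a -> Bnd F K ->
  Dd F d (fun x => Cinv (f x)) (fun x => Cinv (a x)) (fun x => Cmult (Cinv (a x)) (Copp (K x))).
Proof.
  intros H Hd La Ba BK.
  assert (Cf : Cv F f a) by (apply (Dd_Cv d f a _ H Hd); apply Bnd_mult; auto).
  destruct La as [c [Pc HLa]].
  destruct (Bnd_pos F K BK) as [Mk [Pk HK]].
  intros eps Heps. set (q := c * c / 2). assert (Pq : 0 < q) by (unfold q; nra).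
  set (e1 := Rmin (c/2) (eps * q / (1 + Mk))).
  assert (Pe1 : 0 < e1) by (apply Rmin_pos; [lra| apply Rdiv_lt_0_compat; nra]).
  assert (Le1 : e1 <= c/2) by apply Rmin_l. assert (Le2 : e1 * (1 + Mk) <= eps * q).
  { unfold e1. apply Rle_trans with (eps * q/(1+Mk)*(1+Mk)). apply Rmult_le_compat_r. lra. apply Rmin_r. field_simplify; lra. }
  unfold Dd, Cv, Sm in *.
  generalize (filter_and (F:=F) _ _ (filter_and (F:=F) _ _ (H e1 Pe1) (Cf e1 Pe1)) (filter_and (F:=F) _ _ HLa HK)).
  apply filter_imp. intros x [[A B] [C D]].
  assert (Hf : c/2 <= Cmod (f x)).
  { replace (a x) with (Cplus (f x) (Copp (Cminus (f x) (a x)))) in C by ring.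
    pose proof (Cmod_triangle (f x) (Copp (Cminus (f x) (a x)))). rewrite Cmod_opp in H0. lra. }
  assert (nf : f x <> 0%C). { intro E. rewrite E, Cmod_0 in Hf. lra. }
  assert (na : a x <> 0%C). { intro E. rewrite E, Cmod_0 in C. lra. }
  replace (Cminus (Cminus (Cinv (f x)) (Cinv (a x))) (Cmult (d x) (Cmult (Cinv (a x)) (Copp (K x)))))
    with (Cmult (Cplus (Copp (Cminus (Cminus (f x) (a x)) (Cmult (d x) (Cmult (a x) (K x)))))
                       (Cmult (Cmult (d x) (K x)) (Cminus (f x) (a x)))) (Cinv (Cmult (f x) (a x))))
    by (field; auto).
  assert (Hq : q <= Cmod (Cmult (f x) (a x))).
  { rewrite Cmod_mult. unfold q. pose proof (Cmod_ge_0 (a x)). nra. }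
  eapply Rle_trans. apply (Cmod_div_le _ _ (e1 * Cmod (d x) * (1 + Mk)) q Pq Hq).
  eapply Rle_trans. apply Cmod_triangle. rewrite Cmod_opp, !Cmod_mult.
  pose proof (Cmod_ge_0 (d x)). pose proof (Cmod_ge_0 (K x)). pose proof (Cmod_ge_0 (Cminus (f x) (a x))).
  assert (Cmod (d x) * Cmod (K x) * Cmod (Cminus (f x) (a x)) <= Cmod (d x) * Mk * e1).
  { apply Rmult_le_compat. apply Rmult_le_pos; lra. lra. apply Rmult_le_compat_l; lra. lra. }
  nra.
  apply Rmult_le_reg_r with q. lra. unfold Rdiv. rewrite Rmult_assoc, Rinv_l by lra.
  pose proof (Cmod_ge_0 (d x)). nra.
Qed.

End Gen2.


Section Gen3.
Context {X : Type} (F : (X -> Prop) -> Prop) {FF : Filter F}.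

Lemma LB_pow a m : LB F a -> LB F (fun x => Cpow (a x) m).
Proof.
  intros [c [Pc H]]. exists (c ^ m). split. apply pow_lt; auto.
  revert H. apply filter_imp. intros x H. rewrite Cmod_pow. apply pow_incr. lra.
Qed.

Lemma Cv_inv f a : Cv F f a -> LB F a -> Cv F (fun x => Cinv (f x)) (fun x => Cinv (a x)).
Proof.
  intros H [c [Pc HL]]. unfold Cv, Sm in *. intros e He.
  set (e1 := Rmin (c/2) (e * (c*c/4))).
  assert (Pe1 : 0 < e1) by (apply Rmin_pos; [lra| apply Rmult_lt_0_compat; [lra|nra]]).
  generalize (filter_and (F:=F) _ _ (H e1 Pe1) HL). apply filter_imp. intros x [A C].
  assert (Hf : c/2 <= Cmod (f x)).
  { replace (a x) with (Cplus (f x) (Copp (Cminus (f x) (a x)))) in C by ring.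
    pose proof (Cmod_triangle (f x) (Copp (Cminus (f x) (a x)))). rewrite Cmod_opp in H0.
    pose proof (Rmin_l (c/2) (e * (c*c/4))). fold e1 in H1. lra. }
  assert (nf : f x <> 0%C). { intro E. rewrite E, Cmod_0 in Hf. lra. }
  assert (na : a x <> 0%C). { intro E. rewrite E, Cmod_0 in C. lra. }
  replace (Cminus (Cinv (f x)) (Cinv (a x))) with (Cmult (Copp (Cminus (f x) (a x))) (Cinv (Cmult (f x) (a x)))) by (field; auto).
  assert (Hq : c*c/2 <= Cmod (Cmult (f x) (a x))).
  { rewrite Cmod_mult. pose proof (Cmod_ge_0 (a x)). nra. }
  eapply Rle_lt_trans. apply (Cmod_div_le _ _ e1 (c*c/2) ltac:(nra) Hq). rewrite Cmod_opp; lra.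
  apply Rmult_lt_reg_r with (c*c/2). nra. unfold Rdiv. rewrite Rmult_assoc, Rinv_l by nra.
  pose proof (Rmin_r (c/2) (e * (c*c/4))). fold e1 in H0. rewrite Rmult_1_r.
  nra.
Qed.

Lemma Cv_pow f a m : Cv F f a -> Bnd F a -> Cv F (fun x => Cpow (f x) m) (fun x => Cpow (a x) m).
Proof.
  intros H Ba. induction m.
  - simpl. apply (Cv_const F).
  - simpl. apply (Cv_mult F); auto. apply Bnd_pow; auto.
Qed.

Lemma Cv_Cpowz f a n : Cv F f a -> LB F a -> Bnd F a -> Cv F (fun x => Cpowz (f x) n) (fun x => Cpowz (a x) n).
Proof.
  intros H La Ba. destruct n; simpl.
  - apply (Cv_const F).
  - apply Cv_pow; auto.
  - apply Cv_inv. apply Cv_pow; auto. apply LB_pow; auto.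
Qed.

Lemma LB_Cpowz a n : LB F a -> Bnd F a -> LB F (fun x => Cpowz (a x) n).
Proof.
  intros La Ba. destruct n; simpl.
  - exists 1. split. lra. apply filter_forall. intros; rewrite Cmod_1; lra.
  - apply LB_pow; auto.
  - destruct (Bnd_pos F _ (Bnd_pow F a (Pos.to_nat p) Ba)) as [M [PM HM]].
    assert (LBp : LB F (fun x => Cpow (a x) (Pos.to_nat p))) by (apply LB_pow; auto).
    destruct LBp as [c [Pc Hc]].
    exists (/M). split. apply Rinv_0_lt_compat; auto.
    generalize (filter_and (F:=F) _ _ HM Hc). apply filter_imp. intros x [A B].
    assert (Cpow (a x) (Pos.to_nat p) <> 0%C). { intro E. rewrite E, Cmod_0 in B. lra. }
    rewrite Cmod_inv by auto. apply Rinv_le_contravar; lra.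
Qed.

Lemma Bnd_Cpowz a n : LB F a -> Bnd F a -> Bnd F (fun x => Cpowz (a x) n).
Proof.
  intros La Ba. destruct n; simpl.
  - apply (Bnd_const F).
  - apply Bnd_pow; auto.
  - apply (Bnd_inv F). apply LB_pow; auto.
Qed.

End Gen3.


Section Gen4.
Context {X : Type} (F : (X -> Prop) -> Prop) {FF : Filter F}.

Lemma Dd_Cpowz d f a K n : Dd F d f a (fun x => Cmult (a x) (K x)) -> Sm F d -> LB F a -> Bnd F a -> Bnd F K ->
  Dd F d (fun x => Cpowz (f x) n) (fun x => Cpowz (a x) n) (fun x => Cmult (Cpowz (a x) n) (Cmult (RtoC (IZR n)) (K x))).
Proof.
  intros H Hd La Ba BK. destruct n; simpl.
  - intros eps He. apply filter_forall. intros x.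
    replace (Cminus (Cminus 1 1) (Cmult (d x) (Cmult 1 (Cmult (RtoC 0) (K x))))) with (RtoC 0) by ring.
    rewrite Cmod_0. pose proof (Cmod_ge_0 (d x)). nra.
  - generalize (Dd_pow_log F d f a K (Pos.to_nat p) H Hd Ba BK). apply (Dd_ext F); intros x; auto.
    rewrite INR_IPR. reflexivity.
  - assert (H2 := Dd_pow_log F d f a K (Pos.to_nat p) H Hd Ba BK).
    assert (H3 := Dd_inv_log F d _ _ _ H2 Hd (LB_pow F a _ La) (Bnd_pow F a _ Ba) (Bnd_mult F _ _ (Bnd_const F _) BK)).
    revert H3. apply (Dd_ext F); intros x; auto.
    rewrite INR_IPR. rewrite IZR_NEG. unfold IZR. rewrite RtoC_opp. ring.
Qed.

Lemma Dd_sqrt d f a g b K : F (fun x => Cmult (f x) (f x) = g x) -> (forall x, Cmult (a x) (a x) = b x) ->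
  Dd F d g b (fun x => Cmult (b x) (K x)) -> Cv F f a -> LB F a -> Bnd F a -> Bnd F K ->
  Dd F d f a (fun x => Cmult (a x) (Cmult (K x) (RtoC (/2)))).
Proof.
  intros Hsq Hb Hg Cf [c [Pc HL]] Ba BK.
  destruct (Bnd_pos F a Ba) as [Ma [Pa HA]]. destruct (Bnd_pos F K BK) as [Mk [Pk HK]].
  intros eps Heps. set (Q := 1 + Ma * Mk). assert (PQ : 0 < Q) by (unfold Q; nra).
  set (e1 := Rmin c (eps * c / Q)).
  assert (Pe1 : 0 < e1) by (apply Rmin_pos; [lra| apply Rdiv_lt_0_compat; nra]).
  assert (Le1 : e1 <= c) by apply Rmin_l. assert (Le2 : e1 * Q <= eps * c).
  { unfold e1. apply Rle_trans with (eps * c/Q*Q). apply Rmult_le_compat_r. lra. apply Rmin_r. field_simplify; lra. }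
  unfold Dd, Cv, Sm in *.
  generalize (filter_and (F:=F) _ _ (filter_and (F:=F) _ _ (Hg e1 Pe1) (Cf e1 Pe1))
    (filter_and (F:=F) _ _ (filter_and (F:=F) _ _ HL Hsq) (filter_and (F:=F) _ _ HA HK))).
  apply filter_imp. intros x [[A B] [[C E] [G I]]].
  rewrite <- E, <- Hb in A.
  assert (Hs : c <= Cmod (Cplus (f x) (a x))).
  { replace (Cplus (f x) (a x)) with (Cplus (Cmult 2 (a x)) (Cminus (f x) (a x))) by ring.
    pose proof (Cmod_triangle (Cplus (Cmult 2 (a x)) (Cminus (f x) (a x))) (Copp (Cminus (f x) (a x)))).
    replace (Cplus (Cplus (Cmult 2 (a x)) (Cminus (f x) (a x))) (Copp (Cminus (f x) (a x)))) with (Cmult 2 (a x)) in H by ring.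
    rewrite Cmod_opp, Cmod_mult in H. rewrite Cmod_R in H. rewrite Rabs_pos_eq in H by lra. lra. }
  assert (ns : Cplus (f x) (a x) <> 0%C). { intro Z. rewrite Z, Cmod_0 in Hs. lra. }
  replace (Cminus (Cminus (f x) (a x)) (Cmult (d x) (Cmult (a x) (Cmult (K x) (RtoC (/ 2))))))
   with (Cmult (Cminus (Cminus (Cminus (Cmult (f x) (f x)) (Cmult (a x) (a x))) (Cmult (d x) (Cmult (Cmult (a x) (a x)) (K x))))
                       (Cmult (Cmult (Cmult (d x) (a x)) (K x)) (Cmult (Cminus (f x) (a x)) (RtoC (/2)))))
           (Cinv (Cplus (f x) (a x)))).
  2:{ rewrite RtoC_inv by lra. field. auto. }
  eapply Rle_trans. apply (Cmod_div_le _ _ (e1 * Cmod (d x) * Q) c Pc Hs).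
  eapply Rle_trans. apply Cmod_sub. rewrite !Cmod_mult, Cmod_R, Rabs_pos_eq by lra.
  pose proof (Cmod_ge_0 (d x)). pose proof (Cmod_ge_0 (K x)). pose proof (Cmod_ge_0 (a x)). pose proof (Cmod_ge_0 (Cminus (f x) (a x))).
  assert (T : Cmod (d x) * Cmod (a x) * Cmod (K x) <= Cmod (d x) * (Ma * Mk)).
  { rewrite Rmult_assoc. apply Rmult_le_compat_l. lra. apply Rmult_le_compat; lra. }
  assert (T2 : Cmod (d x) * Cmod (a x) * Cmod (K x) * (Cmod (Cminus (f x) (a x)) * / 2) <= Cmod (d x) * (Ma * Mk) * e1).
  { apply Rmult_le_compat; try lra. apply Rmult_le_pos; [apply Rmult_le_pos|]; lra. }
  assert (e1 * Cmod (d x) * Q = e1 * Cmod (d x) + Cmod (d x) * (Ma * Mk) * e1) by (unfold Q; ring).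
  lra.
  apply Rmult_le_reg_r with c. lra. unfold Rdiv. rewrite Rmult_assoc, Rinv_l by lra.
  pose proof (Cmod_ge_0 (d x)). nra.
Qed.

Lemma Bnd_Cprod (a : nat -> X -> C) m : (forall k, (k < m)%nat -> Bnd F (a k)) -> Bnd F (fun x => Cprod_lt m (fun k => a k x)).
Proof.
  induction m; intros H; simpl. apply (Bnd_const F). apply (Bnd_mult F); auto.
Qed.

Lemma Bnd_Csum (a : nat -> X -> C) m : (forall k, (k < m)%nat -> Bnd F (a k)) -> Bnd F (fun x => Csum_lt m (fun k => a k x)).
Proof.
  induction m; intros H; simpl. apply (Bnd_const F). apply (Bnd_plus F); auto.
Qed.

Lemma Dd_Cprod d (f a K : nat -> X -> C) m : Sm F d ->
  (forall k, (k < m)%nat -> Dd F d (f k) (a k) (fun x => Cmult (a k x) (K k x)) /\ Bnd F (a k) /\ Bnd F (K k)) ->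
  Dd F d (fun x => Cprod_lt m (fun k => f k x)) (fun x => Cprod_lt m (fun k => a k x))
     (fun x => Cmult (Cprod_lt m (fun k => a k x)) (Csum_lt m (fun k => K k x))).
Proof.
  intros Hd. induction m; intros H; simpl.
  - intros eps He. apply filter_forall. intros x.
    replace (Cminus (Cminus 1 1) (Cmult (d x) (Cmult 1 0))) with (RtoC 0) by ring.
    rewrite Cmod_0. pose proof (Cmod_ge_0 (d x)). nra.
  - assert (H1 : forall k, (k < m)%nat -> Dd F d (f k) (a k) (fun x => Cmult (a k x) (K k x)) /\ Bnd F (a k) /\ Bnd F (K k)) by (intros; apply H; lia).
    destruct (H m ltac:(lia)) as [Hm [Bam BKm]].
    generalize (Dd_mult_log F d _ _ _ _ _ _ (IHm H1) Hm Hd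
       (Bnd_Cprod a m (fun k Hk => proj1 (proj2 (H1 k Hk))))
       Bam (Bnd_Csum K m (fun k Hk => proj2 (proj2 (H1 k Hk)))) BKm).
    apply (Dd_ext F); intros x; auto.
Qed.

End Gen4.


Lemma sqrt2_lt2 : sqrt 2 < 2.
Proof. pose proof (sqrt_lt_1 2 4 ltac:(lra) ltac:(lra) ltac:(lra)). replace 4 with (2*2) in H by lra. rewrite sqrt_square in H; lra. Qed.

Lemma Rabs_sq x : Rabs x * (Rabs x * 1) = x ^ 2.
Proof. unfold Rabs. destruct (Rcase_abs x); ring. Qed.

Lemma normC (z : C) : @norm R_AbsRing C_R_NormedModule z = Cmod z.
Proof.
  unfold norm. simpl. unfold prod_norm, Cmod. simpl. f_equal.
  change (Rabs (fst z) * (Rabs (fst z) * 1) + Rabs (snd z) * (Rabs (snd z) * 1) = fst z ^ 2 + snd z ^ 2).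
  rewrite !Rabs_sq. reflexivity.
Qed.

Lemma scalC (k : R) (z : C) : @scal R_AbsRing C_R_NormedModule k z = Cmult (RtoC k) z.
Proof.
  destruct z as [x y]. unfold scal; simpl. unfold prod_scal, Cmult, RtoC; simpl.
  change (scal k x) with (k * x). change (scal k y) with (k * y). f_equal; ring.
Qed.

Definition Lt (t : R) : (R -> Prop) -> Prop := fun P => exists d, 0 < d /\ forall s, Rabs (s - t) < d -> P s.
Definition Wt (t : R) : (R -> Prop) -> Prop := fun P => exists d, 0 < d /\ forall s, 0 <= s <= 1 -> Rabs (s - t) < d -> P s.

Global Instance Lt_filter t : Filter (Lt t).
Proof.
  constructor.
  - exists 1. split. lra. auto.
  - intros P Q [d1 [P1 H1]] [d2 [P2 H2]]. exists (Rmin d1 d2). split. apply Rmin_pos; auto.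
    intros s Hs. split. apply H1. eapply Rlt_le_trans. apply Hs. apply Rmin_l.
    apply H2. eapply Rlt_le_trans. apply Hs. apply Rmin_r.
  - intros P Q HPQ [d [Pd H]]. exists d. split; auto.
Qed.

Global Instance Wt_filter t : Filter (Wt t).
Proof.
  constructor.
  - exists 1. split. lra. auto.
  - intros P Q [d1 [P1 H1]] [d2 [P2 H2]]. exists (Rmin d1 d2). split. apply Rmin_pos; auto.
    intros s Hs1 Hs. split. apply H1; auto. eapply Rlt_le_trans. apply Hs. apply Rmin_l.
    apply H2; auto. eapply Rlt_le_trans. apply Hs. apply Rmin_r.
  - intros P Q HPQ [d [Pd H]]. exists d. split; auto.
Qed.

Lemma CC_continuous (f : R -> C) t : Cv (Lt t) f (fun _ => f t) -> @continuous R_UniformSpace C_R_NormedModule f t.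
Proof.
  intros H. unfold continuous. apply filterlim_locally. intros eps.
  destruct (H eps (cond_pos eps)) as [d [Pd Hd]].
  exists (mkposreal d Pd). intros y Hy. apply C_NormedModule_mixin_compat1. apply Hd. exact Hy.
Qed.

Lemma continuous_CC (f : R -> C) t : @continuous R_UniformSpace C_R_NormedModule f t -> Cv (Lt t) f (fun _ => f t).
Proof.
  intros H e He. unfold continuous in H. rewrite filterlim_locally in H.
  destruct (H (mkposreal (e/2) ltac:(lra))) as [d Hd]. exists d. split. apply cond_pos.
  intros s Hs. specialize (Hd s Hs). apply C_NormedModule_mixin_compat2 in Hd.
  simpl in Hd. assert (sqrt 2 < 2) by apply sqrt2_lt2.
  apply Rlt_trans with (sqrt 2 * (e/2)). exact Hd. nra.
Qed.

Lemma Dd_derive (f : R -> C) t l : Dd (Lt t) (fun s => RtoC (s - t)) f (fun _ => f t) (fun _ => l) ->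
  @is_derive R_AbsRing C_R_NormedModule f t l.
Proof.
  intros H. split. apply is_linear_scal_l.
  intros x Hx. apply (@is_filter_lim_locally_unique R_AbsRing R_NormedModule) in Hx. subst x.
  intros eps. destruct (H eps (cond_pos eps)) as [d [Pd Hd]].
  exists (mkposreal d Pd). intros y Hy. rewrite !normC, scalC.
  change (Rabs (y - t) < d) in Hy. specialize (Hd y Hy). rewrite Cmod_R in Hd.
  change (norm (minus y t)) with (Rabs (y - t)). exact Hd.
Qed.

Lemma derive_Dd (f : R -> C) t l : @is_derive R_AbsRing C_R_NormedModule f t l ->
  Dd (Lt t) (fun s => RtoC (s - t)) f (fun _ => f t) (fun _ => l).
Proof.
  intros [_ H]. intros eps Heps.
  destruct (H t (fun P HP => HP) (mkposreal eps Heps)) as [d Hd].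
  exists d. split. apply cond_pos. intros s Hs. specialize (Hd s Hs).
  rewrite !normC, scalC in Hd. change (norm (minus s t)) with (Rabs (s - t)) in Hd.
  rewrite Cmod_R. exact Hd.
Qed.

Lemma partial_of_eps (q : C -> C) (L : C) :
  (forall eps, 0 < eps -> exists d, 0 < d /\ forall h : C, h <> 0%C -> Cmod h < d -> Cmod (Cminus (q h) L) <= eps) ->
  filterlim q (@locally' C_UniformSpace (RtoC 0)) (@locally C_UniformSpace L).
Proof.
  intros H. apply filterlim_locally. intros eps.
  destruct (H (eps/2) ltac:(destruct eps; simpl; lra)) as [d [Pd Hd]].
  assert (sqrt 2 < 2) by apply sqrt2_lt2.
  exists (mkposreal (d/2) ltac:(lra)). intros h Hh Hn.
  apply C_NormedModule_mixin_compat1. eapply Rle_lt_trans. apply Hd. auto.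
  pose proof (C_NormedModule_mixin_compat2 (RtoC 0) h _ Hh) as Hh2. clear Hh. rename Hh2 into Hh. simpl in Hh.
  assert (E : @minus (NormedModuleAux.AbelianGroup C_AbsRing C_NormedModuleAux) h (RtoC 0) = h).
  { destruct h as [x y]. unfold minus, plus, opp, zero; simpl. unfold Cplus, Copp; simpl. f_equal; ring. }
  rewrite E in Hh. assert (sqrt 2 * (d/2) < d) by nra. lra.
  destruct eps; simpl; lra.
Qed.


Lemma is_RInt_Cmult (f : R -> C) a b (l c : C) :
  @is_RInt C_R_NormedModule f a b l -> @is_RInt C_R_NormedModule (fun t => Cmult c (f t)) a b (Cmult c l).
Proof.
  intros H.
  assert (H1 : is_RInt (V := R_NormedModule) (fun t => fst (f t)) a b (fst l)).
  { apply (is_RInt_fct_extend_fst (U:=R_NormedModule) (V:=R_NormedModule)). exact H. }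
  assert (H2 : is_RInt (V := R_NormedModule) (fun t => snd (f t)) a b (snd l)).
  { apply (is_RInt_fct_extend_snd (U:=R_NormedModule) (V:=R_NormedModule)). exact H. }
  destruct c as [cr ci].
  assert (E : Cmult (cr, ci) l = (cr * fst l - ci * snd l, cr * snd l + ci * fst l)).
  { destruct l; unfold Cmult; simpl. reflexivity. }
  rewrite E.
  apply (is_RInt_fct_extend_pair (U:=R_NormedModule) (V:=R_NormedModule)).
  - eapply is_RInt_ext. 2: apply (is_RInt_minus _ _ _ _ _ _ (is_RInt_scal _ _ _ cr _ H1) (is_RInt_scal _ _ _ ci _ H2)).
    intros x _. unfold minus, plus, opp, scal; simpl. unfold mult; simpl. destruct (f x); simpl; ring.
  - eapply is_RInt_ext. 2: apply (is_RInt_plus _ _ _ _ _ _ (is_RInt_scal _ _ _ cr _ H2) (is_RInt_scal _ _ _ ci _ H1)).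
    intros x _. unfold minus, plus, opp, scal; simpl. unfold mult; simpl. destruct (f x); simpl; ring.
Qed.


Definition cl (t : R) := Rmax 0 (Rmin 1 t).

Lemma cl_in t : 0 <= cl t <= 1.
Proof. unfold cl, Rmax, Rmin. repeat destruct Rle_dec; lra. Qed.

Lemma cl_id t : 0 <= t <= 1 -> cl t = t.
Proof. unfold cl, Rmax, Rmin. repeat destruct Rle_dec; lra. Qed.

Lemma cl_lip s t : Rabs (cl s - cl t) <= Rabs (s - t).
Proof. unfold cl, Rmax, Rmin. repeat destruct Rle_dec; unfold Rabs; repeat destruct Rcase_abs; lra. Qed.

Lemma Cmod_rev a b : Rabs (Cmod a - Cmod b) <= Cmod (Cminus a b).
Proof.
  pose proof (Cmod_triangle (Cminus a b) b). pose proof (Cmod_triangle (Cminus b a) a).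
  replace (Cplus (Cminus a b) b) with a in H by ring.
  replace (Cplus (Cminus b a) a) with b in H0 by ring.
  replace (Cminus b a) with (Copp (Cminus a b)) in H0 by ring. rewrite Cmod_opp in H0.
  unfold Rabs; destruct Rcase_abs; lra.
Qed.

Lemma Cv_cl (f : R -> C) s : Cv (Lt (cl s)) f (fun _ => f (cl s)) -> Cv (Lt s) (fun r => f (cl r)) (fun _ => f (cl s)).
Proof.
  intros H e He. destruct (H e He) as [d [Pd Hd]]. exists d. split; auto.
  intros r Hr. apply Hd. eapply Rle_lt_trans. apply cl_lip. auto.
Qed.

Lemma contpt_of_Cv (f : R -> C) s : Cv (Lt s) f (fun _ => f s) -> continuity_pt (fun t => Cmod (f t)) s.
Proof.
  intros H e He. destruct (H e He) as [d [Pd Hd]]. exists d. split; auto.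
  intros x [_ Hx]. simpl. unfold R_dist in *. eapply Rle_lt_trans. apply Cmod_rev. apply Hd. exact Hx.
Qed.

Lemma bound_ab (f : R -> C) : (forall s, Cv (Lt s) f (fun _ => f s)) ->
  exists M, 0 < M /\ forall t, 0 <= t <= 1 -> Cmod (f t) <= M.
Proof.
  intros H. destruct (continuity_ab_maj (fun t => Cmod (f t)) 0 1 ltac:(lra)) as [Mx [HM _]].
  intros c _. apply contpt_of_Cv; auto.
  exists (Cmod (f Mx) + 1). split. pose proof (Cmod_ge_0 (f Mx)); lra.
  intros t Ht. specialize (HM t Ht). simpl in HM. lra.
Qed.

Lemma lbound_ab (f : R -> C) : (forall s, Cv (Lt s) f (fun _ => f s)) -> (forall t, 0 <= t <= 1 -> f t <> 0%C) ->
  exists c, 0 < c /\ forall t, 0 <= t <= 1 -> c <= Cmod (f t).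
Proof.
  intros H Hn. destruct (continuity_ab_min (fun t => Cmod (f t)) 0 1 ltac:(lra)) as [mx [Hm Hmx]].
  intros c _. apply contpt_of_Cv; auto.
  exists (Cmod (f mx)). split. apply Cmod_gt_0. apply Hn; auto.
  intros t Ht. apply Hm; auto.
Qed.

Lemma Cprod_nz m (f : nat -> C) : (forall k, (k < m)%nat -> f k <> 0%C) -> Cprod_lt m f <> 0%C.
Proof.
  induction m; intros H; simpl. intro E. injection E. lra.
  apply Cmult_neq_0. apply IHm. intros; apply H; lia. apply H; lia.
Qed.

Lemma Csum_Cmult c m (f : nat -> C) : Cmult c (Csum_lt m f) = Csum_lt m (fun k => Cmult c (f k)).
Proof. induction m; simpl. ring. rewrite <- IHm. ring. Qed.

Lemma Csum_ext m (f g : nat -> C) : (forall k, (k < m)%nat -> f k = g k) -> Csum_lt m f = Csum_lt m g.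
Proof. induction m; intros H; simpl; auto. f_equal; [apply IHm; intros; apply H; lia | apply H; lia]. Qed.

Lemma Cprod_ext m (f g : nat -> C) : (forall k, (k < m)%nat -> f k = g k) -> Cprod_lt m f = Cprod_lt m g.
Proof. induction m; intros H; simpl; auto. f_equal; [apply IHm; intros; apply H; lia | apply H; lia]. Qed.

Lemma Cprod_change m j (c c' : nat -> C) : (forall k, k <> j -> c' k = c k) ->
  (j < m)%nat -> Cmult (Cprod_lt m c') (c j) = Cmult (Cprod_lt m c) (c' j).
Proof.
  intros Hc. induction m; intros Hj. lia. simpl.
  destruct (Nat.eq_dec m j) as [E|E].
  - subst m. rewrite (Cprod_ext j c' c). ring. intros k Hk. apply Hc. lia.
  - assert (Hj' : (j < m)%nat) by lia. rewrite (Hc m) by auto.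
    transitivity (Cmult (Cmult (Cprod_lt m c') (c j)) (c m)). ring. rewrite IHm by auto. ring.
Qed.


Definition fI (n : Z) (gamma gamma' : R -> C) (V : (nat -> C) -> R -> C) (U : nat -> C) (i : nat) (t : R) : C :=
  Cdiv (Cmult (Cpowz (V U (cl t)) n) (gamma' t)) (Cminus (gamma (cl t)) (U i)).

Lemma Cv_minus_const {X} (F : (X -> Prop) -> Prop) {FF : Filter F} f a c :
  Cv F f a -> Cv F (fun x => Cminus (f x) c) (fun x => Cminus (a x) c).
Proof.
  intros H e He. generalize (H e He). apply filter_imp. intros x. 
  replace (Cminus (Cminus (f x) c) (Cminus (a x) c)) with (Cminus (f x) (a x)) by ring. auto.
Qed.

Lemma LB_const {X} (F : (X -> Prop) -> Prop) {FF : Filter F} (c : C) : c <> 0%C -> LB F (fun _ => c).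
Proof. intros H. exists (Cmod c). split. apply Cmod_gt_0; auto. apply filter_forall. intros; lra. Qed.

Lemma close_refl N U d : 0 < d -> close_lt N U U d.
Proof. intros Hd k _. replace (Cminus (U k) (U k)) with (RtoC 0) by ring. rewrite Cmod_0. auto. Qed.

Lemma Dd_minus_const {X} (F : (X -> Prop) -> Prop) {FF : Filter F} d f a L c :
  Dd F d f a L -> Dd F d (fun x => Cminus (f x) c) (fun x => Cminus (a x) c) L.
Proof.
  intros H e He. generalize (H e He). apply filter_imp. intros x.
  replace (Cminus (Cminus (Cminus (f x) c) (Cminus (a x) c)) (Cmult (d x) (L x))) with (Cminus (Cminus (f x) (a x)) (Cmult (d x) (L x))) by ring. auto.
Qed.

Lemma Sm_Lt t : Sm (Lt t) (fun s => RtoC (s - t)).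
Proof. intros e He. exists e. split; auto. intros s Hs. rewrite Cmod_R. auto. Qed.

Lemma Cv_Csum {X} (F : (X -> Prop) -> Prop) {FF : Filter F} (f a : nat -> X -> C) m :
  (forall k, (k < m)%nat -> Cv F (f k) (a k)) ->
  Cv F (fun x => Csum_lt m (fun k => f k x)) (fun x => Csum_lt m (fun k => a k x)).
Proof.
  induction m; intros H; simpl. apply (Cv_const F). apply (Cv_plus F). apply IHm. intros; apply H; lia. apply H; lia.
Qed.

Lemma is_RInt_Csum (f : nat -> R -> C) a b m : (forall i, (i < m)%nat -> ex_RInt (V := C_R_CompleteNormedModule) (f i) a b) ->
  is_RInt (V := C_R_NormedModule) (fun t => Csum_lt m (fun i => f i t)) a b (Csum_lt m (fun i => RInt (V := C_R_CompleteNormedModule) (f i) a b)).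
Proof.
  induction m; intros H; simpl.
  - assert (HH := is_RInt_const (V:=C_R_NormedModule) a b (RtoC 0)). rewrite scalC in HH.
    replace (Cmult (RtoC (b-a)) (RtoC 0)) with (RtoC 0) in HH by ring. exact HH.
  - apply (is_RInt_plus (V := C_R_NormedModule)). apply IHm. intros; apply H; lia.
    apply (RInt_correct (V := C_R_CompleteNormedModule)). apply H; lia.
Qed.

Definition GG : (C * R -> Prop) -> Prop := fun P => exists d, 0 < d /\ forall (h : C) t, h <> 0%C -> Cmod h < d -> 0 <= t <= 1 -> P (h, t).

Global Instance GG_filter : Filter GG.
Proof.
  constructor.
  - exists 1. split. lra. auto.
  - intros P Q [d1 [P1 H1]] [d2 [P2 H2]]. exists (Rmin d1 d2). split. apply Rmin_pos; auto.
    intros h t Hh Hd Ht. split. apply H1; auto. eapply Rlt_le_trans. apply Hd. apply Rmin_l.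
    apply H2; auto. eapply Rlt_le_trans. apply Hd. apply Rmin_r.
  - intros P Q HPQ [d [Pd H]]. exists d. split; auto.
Qed.

Lemma close_shift N U j (h : C) e : Cmod h < e -> close_lt N U (shift_coord U j h) e.
Proof.
  intros H k _. unfold shift_coord. destruct (Nat.eqb k j).
  replace (Cminus (Cplus (U k) h) (U k)) with h by ring. auto.
  replace (Cminus (U k) (U k)) with (RtoC 0) by ring. rewrite Cmod_0. pose proof (Cmod_ge_0 h); lra.
Qed.

Lemma Sm_GG : Sm GG (fun x => fst x).
Proof. intros e He. exists e. split; auto. Qed.

Section Main.
Variable g : nat.
Variable n : Z.
Hypothesis hn : n <> 0%Z.
Variable Om : (nat -> C) -> Prop.
Variables gamma gamma' : R -> C.
Hypothesis hgd : forall t, is_derive (V := C_R_NormedModule) gamma t (gamma' t).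
Hypothesis hgc : forall t, continuous gamma' t.
Hypothesis havoid : forall U, Om U -> forall t, 0 <= t <= 1 ->
      forall k, (k < 2 * g + 1)%nat -> gamma t <> U k.
Variable V : (nat -> C) -> R -> C.
Hypothesis hVcurve : forall U, Om U -> forall t, 0 <= t <= 1 ->
      Cmult (V U t) (V U t) = Cprod_lt (2 * g + 1) (fun k => Cminus (gamma t) (U k)).
Hypothesis hVcont : jointly_continuous_on (2 * g + 1) Om V.
Hypothesis hVclosed : forall U, Om U -> V U 0 = V U 1.
Hypothesis hOm : open_CN (2 * g + 1) Om.
Hypothesis hdist : forall U, Om U -> forall i j, (i < 2 * g + 1)%nat -> (j < 2 * g + 1)%nat ->
      i <> j -> U i <> U j.

Lemma V_nz U : Om U -> forall t, 0 <= t <= 1 -> V U t <> 0%C.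
Proof.
  intros HU t Ht E. assert (Cprod_lt (2 * g + 1) (fun k => Cminus (gamma t) (U k)) <> 0%C).
  { apply Cprod_nz. intros k Hk Z. apply (havoid U HU t Ht k Hk). 
    replace (gamma t) with (Cplus (Cminus (gamma t) (U k)) (U k)) by ring. rewrite Z. ring. }
  apply H. rewrite <- hVcurve by auto. rewrite E. ring.
Qed.

Lemma Vcl_cont U : Om U -> forall s, Cv (Lt s) (fun r => V U (cl r)) (fun _ => V U (cl s)).
Proof.
  intros HU s e He. destruct (hVcont U (cl s) HU (cl_in s) e He) as [d [Pd Hd]].
  exists d. split; auto. intros r Hr. apply Hd; auto. apply cl_in. apply close_refl; auto.
  eapply Rle_lt_trans. apply cl_lip. auto.
Qed.

Lemma gam_cont s : Cv (Lt s) gamma (fun _ => gamma s).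
Proof. apply continuous_CC. apply ex_derive_continuous. exists (gamma' s). apply hgd. Qed.

Lemma gam'_cont s : Cv (Lt s) gamma' (fun _ => gamma' s).
Proof. apply continuous_CC. apply hgc. Qed.

Lemma gcl_cont s : Cv (Lt s) (fun r => gamma (cl r)) (fun _ => gamma (cl s)).
Proof. apply Cv_cl. apply gam_cont. Qed.

Lemma fI_cont U i : Om U -> (i < 2 * g + 1)%nat -> forall s, Cv (Lt s) (fI n gamma gamma' V U i) (fun _ => fI n gamma gamma' V U i s).
Proof.
  intros HU Hi s. unfold fI, Cdiv.
  assert (nz1 : V U (cl s) <> 0%C) by (apply V_nz; auto; apply cl_in).
  assert (nz2 : Cminus (gamma (cl s)) (U i) <> 0%C).
  { intro Z. apply (havoid U HU (cl s) (cl_in s) i Hi).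
    replace (gamma (cl s)) with (Cplus (Cminus (gamma (cl s)) (U i)) (U i)) by ring. rewrite Z. ring. }
  apply (Cv_mult (Lt s)).
  apply (Cv_mult (Lt s)).
  apply (Cv_Cpowz (Lt s)). apply Vcl_cont; auto. apply (LB_const (Lt s)); auto. apply (Bnd_const (Lt s)).
  apply gam'_cont. apply (Bnd_const (Lt s)). apply (Bnd_const (Lt s)).
  apply (Cv_inv (Lt s)). apply (Cv_minus_const (Lt s)). apply gcl_cont. apply (LB_const (Lt s)); auto.
  apply (Bnd_const (Lt s)). apply (Bnd_const (Lt s)).
Qed.

Lemma fI_ex U i : Om U -> (i < 2 * g + 1)%nat -> forall a b, ex_RInt (V := C_R_CompleteNormedModule) (fI n gamma gamma' V U i) a b.
Proof.
  intros HU Hi a b. apply ex_RInt_continuous. intros z _. apply CC_continuous. apply fI_cont; auto.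
Qed.

Lemma a_coef_eq U i : a_coef n gamma gamma' V i U = RInt (V := C_R_CompleteNormedModule) (fI n gamma gamma' V U i) 0 1.
Proof.
  unfold a_coef. apply (RInt_ext (V := C_R_CompleteNormedModule)). intros x Hx. rewrite Rmin_left, Rmax_right in Hx by lra.
  unfold fI. rewrite cl_id by lra. reflexivity.
Qed.


Definition Sg (U : nat -> C) (t : R) : C := Csum_lt (2 * g + 1) (fun k => Cmult (gamma' t) (Cinv (Cminus (gamma t) (U k)))).

Lemma w_deriv U : Om U -> forall t, 0 < t < 1 ->
  @is_derive R_AbsRing C_R_NormedModule (fun s => Cpowz (V U s) n) t
     (Cmult (Cpowz (V U t) n) (Cmult (RtoC (IZR n)) (Cmult (Sg U t) (RtoC (/2))))).
Proof.
  intros HU t Ht. apply Dd_derive.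
  assert (Ht' : 0 <= t <= 1) by lra.
  set (P := fun s => Cprod_lt (2 * g + 1) (fun k => Cminus (gamma s) (U k))).
  assert (nzk : forall k, (k < 2 * g + 1)%nat -> Cminus (gamma t) (U k) <> 0%C).
  { intros k Hk Z. apply (havoid U HU t Ht' k Hk).
    replace (gamma t) with (Cplus (Cminus (gamma t) (U k)) (U k)) by ring. rewrite Z. ring. }
  assert (DP : Dd (Lt t) (fun s => RtoC (s - t)) P (fun _ => P t) (fun _ => Cmult (P t) (Sg U t))).
  { unfold P, Sg. apply (Dd_Cprod (Lt t) _ (fun k s => Cminus (gamma s) (U k)) (fun k _ => Cminus (gamma t) (U k))
       (fun k _ => Cmult (gamma' t) (Cinv (Cminus (gamma t) (U k))))).
    apply Sm_Lt. intros k Hk. split; [|split; apply (Bnd_const (Lt t))].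
    apply (Dd_ext (Lt t) _ _ _ (fun _ => gamma' t) _ _ _ (fun x => eq_refl) (fun x => eq_refl)).
    intros x. field. auto.
    apply (Dd_minus_const (Lt t) _ gamma (fun _ => gamma t)). apply derive_Dd. apply hgd. }
  assert (nzV : V U t <> 0%C) by (apply V_nz; auto).
  set (dd := Rmin t (1 - t)). assert (Pdd : 0 < dd) by (apply Rmin_pos; lra).
  assert (Hin : forall s, Rabs (s - t) < dd -> 0 <= s <= 1).
  { intros s Hs. pose proof (Rmin_l t (1-t)). pose proof (Rmin_r t (1-t)). fold dd in H, H0.
    unfold Rabs in Hs; destruct Rcase_abs in Hs; lra. }
  assert (CvV : Cv (Lt t) (V U) (fun _ => V U t)).
  { intros e He. destruct (hVcont U t HU Ht' e He) as [d [Pd Hd]].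
    exists (Rmin d dd). split. apply Rmin_pos; auto. intros s Hs.
    assert (Rabs (s - t) < dd) by (eapply Rlt_le_trans; [apply Hs| apply Rmin_r]).
    apply Hd; auto. apply close_refl; auto. eapply Rlt_le_trans; [apply Hs| apply Rmin_l]. }
  assert (DV : Dd (Lt t) (fun s => RtoC (s - t)) (V U) (fun _ => V U t) (fun _ => Cmult (V U t) (Cmult (Sg U t) (RtoC (/2))))).
  { apply (Dd_sqrt (Lt t) _ _ _ P (fun _ => P t) (fun _ => Sg U t)).
    - exists dd. split; auto.
    - intros _. apply hVcurve; auto.
    - exact DP.
    - exact CvV.
    - apply (LB_const (Lt t)); auto.
    - apply (Bnd_const (Lt t)).
    - apply (Bnd_const (Lt t)). }
  apply (Dd_Cpowz (Lt t) _ _ _ (fun _ => Cmult (Sg U t) (RtoC (/2))) n DV).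
  apply Sm_Lt. apply (LB_const (Lt t)); auto. apply (Bnd_const (Lt t)). apply (Bnd_const (Lt t)).
Qed.


Definition Df (U : nat -> C) (s : R) : C := Cmult (RtoC (IZR n / 2)) (Csum_lt (2 * g + 1) (fun i => fI n gamma gamma' V U i s)).

Lemma Df_cont U : Om U -> forall s, Cv (Lt s) (Df U) (fun _ => Df U s).
Proof.
  intros HU s. unfold Df. apply (Cv_mult (Lt s)). apply (Cv_const (Lt s)).
  apply (Cv_Csum (Lt s) (fun i r => fI n gamma gamma' V U i r) (fun i _ => fI n gamma gamma' V U i s)).
  intros k Hk. apply fI_cont; auto. apply (Bnd_const (Lt s)). apply (Bnd_const (Lt s)).
Qed.

Lemma Df_ex U : Om U -> forall a b, ex_RInt (V := C_R_CompleteNormedModule) (Df U) a b.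
Proof.
  intros HU a b. apply ex_RInt_continuous. intros z _. apply CC_continuous. apply Df_cont; auto.
Qed.

Lemma Df_deriv U : Om U -> forall x, 0 < x < 1 ->
  @is_derive R_AbsRing C_R_NormedModule (fun s => Cpowz (V U s) n) x (Df U x).
Proof.
  intros HU x Hx. replace (Df U x) with (Cmult (Cpowz (V U x) n) (Cmult (RtoC (IZR n)) (Cmult (Sg U x) (RtoC (/2))))).
  apply w_deriv; auto.
  unfold Df, Sg. rewrite (Csum_ext _ (fun i => fI n gamma gamma' V U i x)
     (fun i => Cmult (Cpowz (V U x) n) (Cmult (gamma' x) (Cinv (Cminus (gamma x) (U i)))))).
  rewrite <- (Csum_Cmult (Cpowz (V U x) n)). unfold Rdiv. rewrite RtoC_mult. ring.
  intros k Hk. unfold fI, Cdiv. rewrite cl_id by lra. ring.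
Qed.

Lemma FTC_ab U : Om U -> forall a b, 0 < a -> a <= b -> b < 1 ->
  RInt (V := C_R_CompleteNormedModule) (Df U) a b = Cminus (Cpowz (V U b) n) (Cpowz (V U a) n).
Proof.
  intros HU a b Ha Hab Hb. apply is_RInt_unique.
  apply (is_RInt_derive (V := C_R_CompleteNormedModule) (fun s => Cpowz (V U s) n)).
  - intros x Hx. rewrite Rmin_left, Rmax_right in Hx by lra. apply Df_deriv; auto. lra.
  - intros x _. apply CC_continuous. apply Df_cont; auto.
Qed.

Lemma RInt_bound (f : R -> C) a b M : a <= b -> ex_RInt (V := C_R_CompleteNormedModule) f a b ->
  (forall x, a <= x <= b -> Cmod (f x) <= M) -> Cmod (RInt (V := C_R_CompleteNormedModule) f a b) <= (b - a) * M.
Proof.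
  intros Hab Hex H. rewrite <- normC.
  apply (norm_RInt_le_const (V := C_R_NormedModule) f a b). auto. intros x Hx. rewrite normC. auto.
  apply (RInt_correct (V := C_R_CompleteNormedModule)). auto.
Qed.

Lemma Df_int0 U : Om U -> RInt (V := C_R_CompleteNormedModule) (Df U) 0 1 = RtoC 0.
Proof.
  intros HU.
  destruct (bound_ab (Df U) (Df_cont U HU)) as [M [PM HM]].
  set (I := RInt (V := C_R_CompleteNormedModule) (Df U) 0 1).
  assert (forall eps, 0 < eps -> Cmod I <= eps).
  { intros eps Heps.
    assert (nz0 : V U 0 <> 0%C) by (apply V_nz; auto; lra).
    assert (nz1 : V U 1 <> 0%C) by (apply V_nz; auto; lra).
    assert (C0 : Cv (Wt 0) (fun s => Cpowz (V U s) n) (fun _ => Cpowz (V U 0) n)).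
    { apply (Cv_Cpowz (Wt 0)). intros e He. destruct (hVcont U 0 HU ltac:(lra) e He) as [d [Pd Hd]].
      exists d. split; auto. intros s Hs Hs'. apply Hd; auto. apply close_refl; auto.
      apply (LB_const (Wt 0)); auto. apply (Bnd_const (Wt 0)). }
    assert (C1 : Cv (Wt 1) (fun s => Cpowz (V U s) n) (fun _ => Cpowz (V U 1) n)).
    { apply (Cv_Cpowz (Wt 1)). intros e He. destruct (hVcont U 1 HU ltac:(lra) e He) as [d [Pd Hd]].
      exists d. split; auto. intros s Hs Hs'. apply Hd; auto. apply close_refl; auto.
      apply (LB_const (Wt 1)); auto. apply (Bnd_const (Wt 1)). }
    destruct (C0 (eps/4) ltac:(lra)) as [d0 [Pd0 H0]].
    destruct (C1 (eps/4) ltac:(lra)) as [d1 [Pd1 H1]].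
    set (a := Rmin (1/4) (Rmin (d0/2) (eps/(4*M)))).
    set (c := Rmin (1/4) (Rmin (d1/2) (eps/(4*M)))).
    assert (Pa : 0 < a) by (apply Rmin_pos; [lra| apply Rmin_pos; [lra| apply Rdiv_lt_0_compat; lra]]).
    assert (Pc : 0 < c) by (apply Rmin_pos; [lra| apply Rmin_pos; [lra| apply Rdiv_lt_0_compat; lra]]).
    assert (a <= 1/4) by apply Rmin_l. assert (c <= 1/4) by apply Rmin_l.
    assert (a <= d0/2) by (eapply Rle_trans; [apply Rmin_r| apply Rmin_l]).
    assert (c <= d1/2) by (eapply Rle_trans; [apply Rmin_r| apply Rmin_l]).
    assert (a <= eps/(4*M)) by (eapply Rle_trans; [apply Rmin_r| apply Rmin_r]).
    assert (c <= eps/(4*M)) by (eapply Rle_trans; [apply Rmin_r| apply Rmin_r]).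
    set (b := 1 - c).
    assert (E : I = Cplus (Cplus (RInt (V := C_R_CompleteNormedModule) (Df U) 0 a) (RInt (V := C_R_CompleteNormedModule) (Df U) a b))
                          (RInt (V := C_R_CompleteNormedModule) (Df U) b 1)).
    { unfold I. rewrite <- (RInt_Chasles (V := C_R_CompleteNormedModule) (Df U) 0 b 1).
      rewrite <- (RInt_Chasles (V := C_R_CompleteNormedModule) (Df U) 0 a b). reflexivity.
      all: apply Df_ex; auto. }
    rewrite E. rewrite (FTC_ab U HU a b); try (unfold b; lra).
    assert (B1 : Cmod (RInt (V := C_R_CompleteNormedModule) (Df U) 0 a) <= (a - 0) * M).
    { apply RInt_bound. lra. apply Df_ex; auto. intros x Hx. apply HM. lra. }
    assert (B2 : Cmod (RInt (V := C_R_CompleteNormedModule) (Df U) b 1) <= (1 - b) * M).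
    { apply RInt_bound. unfold b; lra. apply Df_ex; auto. intros x Hx. apply HM. unfold b in Hx; lra. }
    assert (W0 : Cmod (Cminus (Cpowz (V U a) n) (Cpowz (V U 0) n)) < eps/4).
    { apply H0. lra. rewrite Rminus_0_r, Rabs_pos_eq; lra. }
    assert (W1 : Cmod (Cminus (Cpowz (V U b) n) (Cpowz (V U 1) n)) < eps/4).
    { apply H1. unfold b; lra. unfold b. replace (1 - c - 1) with (- c) by ring. rewrite Rabs_Ropp, Rabs_pos_eq; lra. }
    rewrite <- (hVclosed U HU) in W1.
    replace (Cplus (Cplus (RInt (V := C_R_CompleteNormedModule) (Df U) 0 a) (Cminus (Cpowz (V U b) n) (Cpowz (V U a) n)))
                          (RInt (V := C_R_CompleteNormedModule) (Df U) b 1))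
      with (Cplus (Cplus (RInt (V := C_R_CompleteNormedModule) (Df U) 0 a) (Cminus (Cminus (Cpowz (V U b) n) (Cpowz (V U 0) n)) (Cminus (Cpowz (V U a) n) (Cpowz (V U 0) n))))
                          (RInt (V := C_R_CompleteNormedModule) (Df U) b 1)) by ring.
    eapply Rle_trans. apply Cmod_triangle. eapply Rle_trans. apply Rplus_le_compat_r. apply Cmod_triangle.
    pose proof (Cmod_sub (Cminus (Cpowz (V U b) n) (Cpowz (V U 0) n)) (Cminus (Cpowz (V U a) n) (Cpowz (V U 0) n))).
    assert (a * M <= eps/4). { apply Rle_trans with (eps/(4*M)*M). apply Rmult_le_compat_r; lra. right; field; lra. }
    assert (c * M <= eps/4). { apply Rle_trans with (eps/(4*M)*M). apply Rmult_le_compat_r; lra. right; field; lra. }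
    assert (Eb : 1 - b = c) by (unfold b; ring). rewrite Eb in B2. rewrite Rminus_0_r in B1. lra. }
  apply Cmod_eq_0. destruct (Rle_lt_dec (Cmod I) 0) as [L|L].
  apply Rle_antisym; auto. apply Cmod_ge_0.
  specialize (H (Cmod I / 2) ltac:(lra)). lra.
Qed.



Lemma sum_zero U : Om U -> Csum_lt (2 * g + 1) (fun i => a_coef n gamma gamma' V i U) = RtoC 0.
Proof.
  intros HU. rewrite (Csum_ext _ _ (fun i => RInt (V := C_R_CompleteNormedModule) (fI n gamma gamma' V U i) 0 1)).
  2:{ intros; apply a_coef_eq. }
  set (X := Csum_lt (2 * g + 1) (fun i => RInt (V := C_R_CompleteNormedModule) (fI n gamma gamma' V U i) 0 1)).
  assert (HX := is_RInt_Csum (fun i => fI n gamma gamma' V U i) 0 1 (2 * g + 1) (fun i Hi => fI_ex U i HU Hi 0 1)).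
  apply is_RInt_Cmult with (c := RtoC (IZR n / 2)) in HX.
  apply (is_RInt_unique (V := C_R_CompleteNormedModule)) in HX.
  fold X in HX. change (RInt (V := C_R_CompleteNormedModule) (Df U) 0 1 = Cmult (RtoC (IZR n / 2)) X) in HX.
  rewrite Df_int0 in HX by auto.
  assert (nz : RtoC (IZR n / 2) <> 0%C).
  { intro Z. injection Z. intros Z'. apply hn. apply eq_IZR. lra. }
  symmetry in HX. replace X with (Cmult (Cinv (RtoC (IZR n / 2))) (Cmult (RtoC (IZR n / 2)) X)) by (field; auto).
  rewrite HX. ring.
Qed.


Lemma Vunif U j : Om U -> forall d0, 0 < d0 -> (forall h : C, Cmod h < d0 -> Om (shift_coord U j h)) ->
  Cv GG (fun x => V (shift_coord U j (fst x)) (snd x)) (fun x => V U (snd x)).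
Proof.
  intros HU d0 Pd0 Hd0 eps Heps.
  assert (Hex : forall t, exists dl : posreal, 0 <= t <= 1 -> forall U' t', Om U' -> 0 <= t' <= 1 ->
      close_lt (2 * g + 1) U U' dl -> Rabs (t' - t) < dl -> Cmod (Cminus (V U' t') (V U t)) < eps / 2).
  { intros t. destruct (Rle_dec 0 t) as [H1|H1]; [destruct (Rle_dec t 1) as [H2|H2]|].
    - destruct (hVcont U t HU (conj H1 H2) (eps/2) ltac:(lra)) as [d [Pd Hd]].
      exists (mkposreal d Pd). intros _. exact Hd.
    - exists (mkposreal 1 Rlt_0_1). intros [_ Z]. lra.
    - exists (mkposreal 1 Rlt_0_1). intros [Z _]. lra. }
  set (delta := fun t => proj1_sig (constructive_indefinite_description _ (Hex t))).
  assert (Hdelta : forall t, 0 <= t <= 1 -> forall U' t', Om U' -> 0 <= t' <= 1 ->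
      close_lt (2 * g + 1) U U' (delta t) -> Rabs (t' - t) < delta t -> Cmod (Cminus (V U' t') (V U t)) < eps / 2).
  { intros t. unfold delta. destruct (constructive_indefinite_description _ (Hex t)) as [dl Hdl]. simpl. exact Hdl. }
  destruct (compactness_value_1d 0 1 delta) as [dd Hdd].
  exists (Rmin dd d0). split. apply Rmin_pos; auto. apply cond_pos.
  intros h t Hh Hd Ht. simpl.
  assert (HOm : Om (shift_coord U j h)) by (apply Hd0; eapply Rlt_le_trans; [apply Hd| apply Rmin_r]).
  apply NNPP. intros Hneg. apply (Hdd t Ht). intros [tt [Htt [Hx Hle]]].
  apply Hneg.
  assert (A1 : Cmod (Cminus (V (shift_coord U j h) t) (V U tt)) < eps / 2).
  { apply Hdelta; auto. apply close_shift. eapply Rlt_le_trans. apply Hd.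
    eapply Rle_trans. apply Rmin_l. auto. }
  assert (A2 : Cmod (Cminus (V U t) (V U tt)) < eps / 2).
  { apply Hdelta; auto. apply close_refl. apply cond_pos. }
  replace (Cminus (V (shift_coord U j h) t) (V U t)) with (Cminus (Cminus (V (shift_coord U j h) t) (V U tt)) (Cminus (V U t) (V U tt))) by ring.
  eapply Rle_lt_trans. apply Cmod_sub. lra.
Qed.

Lemma gam_nz U k : Om U -> (k < 2 * g + 1)%nat -> forall t, 0 <= t <= 1 -> Cminus (gamma t) (U k) <> 0%C.
Proof.
  intros HU Hk t Ht Z. apply (havoid U HU t Ht k Hk).
  replace (gamma t) with (Cplus (Cminus (gamma t) (U k)) (U k)) by ring. rewrite Z. ring.
Qed.

Lemma lb01 (f : R -> C) : (forall s, Cv (Lt s) (fun t => f (cl t)) (fun _ => f (cl s))) ->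
  (forall t, 0 <= t <= 1 -> f t <> 0%C) -> exists c, 0 < c /\ forall t, 0 <= t <= 1 -> c <= Cmod (f t).
Proof.
  intros H Hn. destruct (lbound_ab (fun t => f (cl t)) H) as [c [Pc Hc]].
  intros t Ht. apply Hn. apply cl_in.
  exists c. split; auto. intros t Ht. rewrite <- (cl_id t) by auto. apply Hc; auto.
Qed.

Lemma ub01 (f : R -> C) : (forall s, Cv (Lt s) (fun t => f (cl t)) (fun _ => f (cl s))) ->
  exists M, 0 < M /\ forall t, 0 <= t <= 1 -> Cmod (f t) <= M.
Proof.
  intros H. destruct (bound_ab (fun t => f (cl t)) H) as [M [PM HM]].
  exists M. split; auto. intros t Ht. rewrite <- (cl_id t) by auto. apply HM; auto.
Qed.

Lemma shift_open U j : Om U -> exists d0, 0 < d0 /\ forall h : C, Cmod h < d0 -> Om (shift_coord U j h).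
Proof.
  intros HU. destruct (hOm U HU) as [d [Pd Hd]]. exists d. split; auto.
  intros h Hh. apply Hd. apply close_shift; auto.
Qed.

Definition cc (U : nat -> C) (i j : nat) : C := Cmult (Cmult (RtoC (IZR n)) (Cinv 2)) (Cinv (Cminus (U j) (U i))).

Lemma unif_est U i j : Om U -> (i < 2 * g + 1)%nat -> (j < 2 * g + 1)%nat -> i <> j ->
  forall eps, 0 < eps -> exists d, 0 < d /\ forall (h : C) (t : R), h <> 0%C -> Cmod h < d -> 0 <= t <= 1 ->
  Cmod (Cminus (Cminus (fI n gamma gamma' V (shift_coord U j h) i t) (fI n gamma gamma' V U i t))
          (Cmult h (Cmult (cc U i j) (Cminus (fI n gamma gamma' V U i t) (fI n gamma gamma' V U j t))))) <= eps * Cmod h.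
Proof.
  intros HU Hi Hj Hij eps Heps.
  destruct (shift_open U j HU) as [d0 [Pd0 Hd0]].
  destruct (lb01 (V U)) as [cv [Pcv Hcv]].
  { intros s. apply Vcl_cont; auto. } { intros t Ht. apply V_nz; auto. }
  destruct (ub01 (V U)) as [Mv [PMv HMv]]. { intros s. apply Vcl_cont; auto. }
  destruct (lb01 (fun t => Cminus (gamma t) (U j))) as [mj [Pmj Hmj]].
  { intros s. apply (Cv_minus_const (Lt s)). apply gcl_cont. } { intros t Ht. apply gam_nz; auto. }
  destruct (lb01 (fun t => Cminus (gamma t) (U i))) as [mi [Pmi Hmi]].
  { intros s. apply (Cv_minus_const (Lt s)). apply gcl_cont. } { intros t Ht. apply gam_nz; auto. }
  destruct (ub01 gamma') as [Mg [PMg HMg]]. { intros s. apply Cv_cl. apply gam'_cont. }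
  set (phi := fun x : C * R => V (shift_coord U j (fst x)) (cl (snd x))).
  set (a := fun x : C * R => V U (cl (snd x))).
  set (gg := fun x : C * R => Cprod_lt (2 * g + 1) (fun k => Cminus (gamma (cl (snd x))) (shift_coord U j (fst x) k))).
  set (bb := fun x : C * R => Cprod_lt (2 * g + 1) (fun k => Cminus (gamma (cl (snd x))) (U k))).
  set (K := fun x : C * R => Copp (Cinv (Cminus (gamma (cl (snd x))) (U j)))).
  set (B := fun x : C * R => Cmult (gamma' (snd x)) (Cinv (Cminus (gamma (cl (snd x))) (U i)))).
  assert (La : LB GG a). { exists cv. split; auto. exists 1. split. lra. intros h t _ _ Ht. unfold a; simpl. rewrite cl_id by auto. apply Hcv; auto. }
  assert (Ba : Bnd GG a). { exists Mv. exists 1. split. lra. intros h t _ _ Ht. unfold a; simpl. rewrite cl_id by auto. apply HMv; auto. }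
  assert (BK : Bnd GG K). { exists (/ mj). exists 1. split. lra. intros h t _ _ Ht. unfold K. simpl. rewrite cl_id by auto.
    rewrite Cmod_opp. specialize (Hmj t Ht). simpl in Hmj. rewrite Cmod_inv by (apply gam_nz; auto).
    apply Rinv_le_contravar; lra. }
  assert (BB : Bnd GG B). { exists (Mg * / mi). exists 1. split. lra. intros h t _ _ Ht. unfold B. simpl. rewrite cl_id by auto.
    specialize (Hmi t Ht). simpl in Hmi. rewrite Cmod_mult, Cmod_inv by (apply gam_nz; auto).
    apply Rmult_le_compat. apply Cmod_ge_0. left; apply Rinv_0_lt_compat. apply Cmod_gt_0. apply gam_nz; auto.
    apply HMg; auto. apply Rinv_le_contravar; lra. }
  assert (DP : Dd GG (fun x => fst x) gg bb (fun x => Cmult (bb x) (K x))).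
  { intros e He. exists 1. split. lra. intros h t Hh _ Ht. unfold gg, bb, K; simpl.
    set (c := fun k => Cminus (gamma (cl t)) (U k)).
    set (c' := fun k => Cminus (gamma (cl t)) (shift_coord U j h k)).
    assert (nzj : c j <> 0%C) by (apply gam_nz; auto; apply cl_in).
    assert (E2 : Cmult (Cprod_lt (2 * g + 1) c') (c j) = Cmult (Cprod_lt (2 * g + 1) c) (c' j)).
    { apply Cprod_change; auto. intros k Hk. unfold c, c', shift_coord. apply Nat.eqb_neq in Hk. rewrite Hk. reflexivity. }
    assert (cj' : c' j = Cminus (c j) h) by (unfold c, c', shift_coord; rewrite Nat.eqb_refl; ring).
    assert (E' : Cprod_lt (2 * g + 1) c' = Cmult (Cprod_lt (2 * g + 1) c) (Cmult (Cminus (c j) h) (Cinv (c j)))).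
    { transitivity (Cmult (Cmult (Cprod_lt (2 * g + 1) c') (c j)) (Cinv (c j))). field; auto.
      rewrite E2, cj'. ring. }
    change (Cmod (Cminus (Cminus (Cprod_lt (2 * g + 1) c') (Cprod_lt (2 * g + 1) c))
       (Cmult h (Cmult (Cprod_lt (2 * g + 1) c) (Copp (Cinv (c j)))))) <= e * Cmod h).
    rewrite E'.
    replace (Cminus (Cminus (Cmult (Cprod_lt (2 * g + 1) c) (Cmult (Cminus (c j) h) (Cinv (c j)))) (Cprod_lt (2 * g + 1) c))
       (Cmult h (Cmult (Cprod_lt (2 * g + 1) c) (Copp (Cinv (c j)))))) with (RtoC 0) by (field; auto).
    rewrite Cmod_0. pose proof (Cmod_ge_0 h). nra. }
  assert (DV : Dd GG (fun x => fst x) phi a (fun x => Cmult (a x) (Cmult (K x) (RtoC (/2))))).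
  { apply (Dd_sqrt GG _ _ _ gg bb K).
    - exists d0. split; auto. intros h t _ Hh Ht. unfold phi, gg; simpl. apply hVcurve; auto. apply cl_in.
    - intros x. unfold a, bb. apply hVcurve; auto. apply cl_in.
    - exact DP.
    - intros e He. destruct (Vunif U j HU d0 Pd0 Hd0 e He) as [d [Pd Hd]]. exists d. split; auto.
      intros h t Hh Hdh Ht. unfold phi, a; simpl. rewrite cl_id by auto. apply (Hd h t); auto.
    - exact La. - exact Ba. - exact BK. }
  assert (BK2 : Bnd GG (fun x => Cmult (RtoC (IZR n)) (Cmult (K x) (RtoC (/2))))).
  { apply (Bnd_mult GG). apply (Bnd_const GG). apply (Bnd_mult GG); auto. apply (Bnd_const GG). }
  assert (DW := Dd_Cpowz GG _ _ _ _ n DV Sm_GG La Ba (Bnd_mult GG _ _ BK (Bnd_const GG _))).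
  assert (DB : Dd GG (fun x => fst x) B B (fun x => Cmult (B x) 0)).
  { intros e He. apply filter_forall. intros x.
    replace (Cminus (Cminus (B x) (B x)) (Cmult (fst x) (Cmult (B x) 0))) with (RtoC 0) by ring.
    rewrite Cmod_0. pose proof (Cmod_ge_0 (fst x)). nra. }
  assert (DF := Dd_mult_log GG _ _ (fun x => Cpowz (a x) n) (fun x => Cmult (RtoC (IZR n)) (Cmult (K x) (RtoC (/2))))
      _ _ (fun _ => RtoC 0) DW DB Sm_GG (Bnd_Cpowz GG a n La Ba) BB BK2 (Bnd_const GG _)).
  destruct (DF eps Heps) as [d [Pd Hd]]. exists d. split; auto. intros h t Hh Hdh Ht.
  specialize (Hd h t Hh Hdh Ht). simpl in Hd.
  assert (nzi : Cminus (gamma (cl t)) (U i) <> 0%C) by (apply gam_nz; auto; apply cl_in).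
  assert (nzj : Cminus (gamma (cl t)) (U j) <> 0%C) by (apply gam_nz; auto; apply cl_in).
  assert (nzij : Cminus (U j) (U i) <> 0%C).
  { intro Z. apply (hdist U HU j i Hj Hi (fun E => Hij (eq_sym E))).
    replace (U j) with (Cplus (Cminus (U j) (U i)) (U i)) by ring. rewrite Z. ring. }
  assert (Si : shift_coord U j h i = U i).
  { unfold shift_coord. apply Nat.eqb_neq in Hij. rewrite Hij. reflexivity. }
  unfold phi, a, B, K in Hd. simpl in Hd.
  unfold fI, Cdiv, cc. rewrite Si.
  assert (n2 : RtoC 2 <> 0%C) by (intro Z; injection Z; lra).
  match goal with |- Cmod ?X <= _ => match type of Hd with Cmod ?Y <= _ => replace X with Y; [exact Hd|] end end.
  rewrite RtoC_inv by lra. field. repeat split; auto.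
Qed.

Lemma partial_main U i j : Om U -> (i < 2 * g + 1)%nat -> (j < 2 * g + 1)%nat -> i <> j ->
  has_partial (a_coef n gamma gamma' V i) U j
         (Cmult (Cdiv (IZR n) 2)
            (Cdiv (Cminus (a_coef n gamma gamma' V i U) (a_coef n gamma gamma' V j U))
                  (Cminus (U j) (U i)))).
Proof.
  intros HU Hi Hj Hij. unfold has_partial. apply partial_of_eps. intros eps Heps.
  destruct (shift_open U j HU) as [d0 [Pd0 Hd0]].
  destruct (unif_est U i j HU Hi Hj Hij eps Heps) as [d [Pd Hd]].
  exists (Rmin d d0). split. apply Rmin_pos; auto. intros h Hh Hdh.
  assert (HOm : Om (shift_coord U j h)) by (apply Hd0; eapply Rlt_le_trans; [apply Hdh| apply Rmin_r]).
  assert (Hdh' : Cmod h < d) by (eapply Rlt_le_trans; [apply Hdh| apply Rmin_l]).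
  rewrite !a_coef_eq.
  set (Fh := fI n gamma gamma' V (shift_coord U j h) i).
  set (F0 := fI n gamma gamma' V U i).
  set (Fj := fI n gamma gamma' V U j).
  set (A := RInt (V := C_R_CompleteNormedModule) Fh 0 1).
  set (A0 := RInt (V := C_R_CompleteNormedModule) F0 0 1).
  set (Aj := RInt (V := C_R_CompleteNormedModule) Fj 0 1).
  assert (I1 : is_RInt (V := C_R_NormedModule) Fh 0 1 A) by (apply (RInt_correct (V := C_R_CompleteNormedModule)); apply fI_ex; auto).
  assert (I2 : is_RInt (V := C_R_NormedModule) F0 0 1 A0) by (apply (RInt_correct (V := C_R_CompleteNormedModule)); apply fI_ex; auto).
  assert (I3 : is_RInt (V := C_R_NormedModule) Fj 0 1 Aj) by (apply (RInt_correct (V := C_R_CompleteNormedModule)); apply fI_ex; auto).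
  assert (IS : is_RInt (V := C_R_NormedModule) (fun t => Cminus (Cminus (Fh t) (F0 t)) (Cmult h (Cmult (cc U i j) (Cminus (F0 t) (Fj t))))) 0 1
                 (Cminus (Cminus A A0) (Cmult h (Cmult (cc U i j) (Cminus A0 Aj))))).
  { apply (is_RInt_minus (V := C_R_NormedModule)). apply (is_RInt_minus (V := C_R_NormedModule)); auto.
    apply is_RInt_Cmult. apply is_RInt_Cmult. apply (is_RInt_minus (V := C_R_NormedModule)); auto. }
  assert (Bd := norm_RInt_le_const (V := C_R_NormedModule) _ 0 1 _ (eps * Cmod h) ltac:(lra)
                  (fun t Ht => eq_ind_r (fun z => z <= eps * Cmod h) (Hd h t Hh Hdh' Ht) (normC _)) IS).
  rewrite normC in Bd.
  assert (nzij : Cminus (U j) (U i) <> 0%C).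
  { intro Z. apply (hdist U HU j i Hj Hi (fun E => Hij (eq_sym E))).
    replace (U j) with (Cplus (Cminus (U j) (U i)) (U i)) by ring. rewrite Z. ring. }
  assert (n2 : RtoC 2 <> 0%C) by (intro Z; injection Z; lra).
  replace (Cminus (Cdiv (Cminus A A0) h) (Cmult (Cdiv (IZR n) 2) (Cdiv (Cminus A0 Aj) (Cminus (U j) (U i)))))
    with (Cmult (Cminus (Cminus A A0) (Cmult h (Cmult (cc U i j) (Cminus A0 Aj)))) (Cinv h)).
  2:{ unfold cc, Cdiv. field. repeat split; auto. }
  rewrite Cmod_mult, Cmod_inv by auto.
  assert (Ph : 0 < Cmod h) by (apply Cmod_gt_0; auto).
  apply Rmult_le_reg_r with (Cmod h). auto. rewrite Rmult_assoc, Rinv_l by lra. lra.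
Qed.

Lemma theorem1_sec : forall U, Om U ->
    (forall i j, (i < 2 * g + 1)%nat -> (j < 2 * g + 1)%nat -> i <> j ->
       has_partial (a_coef n gamma gamma' V i) U j
         (Cmult (Cdiv (IZR n) 2)
            (Cdiv (Cminus (a_coef n gamma gamma' V i U) (a_coef n gamma gamma' V j U))
                  (Cminus (U j) (U i)))))
    /\ Csum_lt (2 * g + 1) (fun i => a_coef n gamma gamma' V i U) = RtoC 0.
Proof.
  intros U HU. split. intros i j Hi Hj Hij. apply partial_main; auto. apply sum_zero; auto.
Qed.

End Main.


Theorem theorem1
  (g : nat) (hg : (1 <= g)%nat)
  (n : Z) (hn : n <> 0%Z)
  (Om : (nat -> C) -> Prop) (hOm : open_CN (2 * g + 1) Om)
  (hdist : forall U, Om U -> forall i j, (i < 2 * g + 1)%nat -> (j < 2 * g + 1)%nat ->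
      i <> j -> U i <> U j)
  (gamma gamma' : R -> C)
  (hgd : forall t, is_derive (V := C_R_NormedModule) gamma t (gamma' t))
  (hgc : forall t, continuous gamma' t)
  (hgclosed : gamma 0 = gamma 1)
  (havoid : forall U, Om U -> forall t, 0 <= t <= 1 ->
      forall k, (k < 2 * g + 1)%nat -> gamma t <> U k)
  (V : (nat -> C) -> R -> C)
  (hVcurve : forall U, Om U -> forall t, 0 <= t <= 1 ->
      Cmult (V U t) (V U t) = Cprod_lt (2 * g + 1) (fun k => Cminus (gamma t) (U k)))
  (hVclosed : forall U, Om U -> V U 0 = V U 1)
  (hVcont : jointly_continuous_on (2 * g + 1) Om V) :
  forall U, Om U ->
    (forall i j, (i < 2 * g + 1)%nat -> (j < 2 * g + 1)%nat -> i <> j ->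
       has_partial (a_coef n gamma gamma' V i) U j
         (Cmult (Cdiv (IZR n) 2)
            (Cdiv (Cminus (a_coef n gamma gamma' V i U) (a_coef n gamma gamma' V j U))
                  (Cminus (U j) (U i)))))
    /\ Csum_lt (2 * g + 1) (fun i => a_coef n gamma gamma' V i U) = RtoC 0.
Proof.
  intros U HU. eapply theorem1_sec; eassumption.
Qed.
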